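(* Let $G$ be any graph in the class $\mathcal{G}$ (defined in the context), and suppose $L(T_G^0)=L(T_G^1)=k+1$ for a positive integer $k$. Then for each vertex $V$ of $G$, the binary string $\phi_G(V)$ has length $2^{k+1-L(V)}$. In particular, $\phi_G(V_G^r)$ has length $2^k$.
   Context: $\mathcal{G}$ is the set of all finite graphs $G$ such that: (a) $G$ is directed and acyclic; (b) $G$ has a unique nonterminal vertex $V_G^r$ (the root) such that every other vertex is reachable from $V_G^r$ by a directed path; (c) $G$ has exactly two terminal vertices (vertices with no outgoing edges), denoted $T_G^0$ and $T_G^1$; (d) from each nonterminal vertex emanate exactly two edges, one labelled $0$ and one labelled $1$, terminating at different vertices; (e) each vertex $V$ carries a positive integer level $L(V)$ with $L(V_G^r)=1$, $L(T_G^0)=L(T_G^1)$, and levels strictly increasing along every directed path (not necessarily consecutively). For a binary string $y$ and positive integer $j$, $y^j$ denotes the concatenation of $j$ copies of $y$; juxtaposition denotes concatenation. The map $\phi_G$ from the vertex set of $G$ to the set of nonempty finite binary strings is defined by $\phi_G(T_G^0)=0$, $\phi_G(T_G^1)=1$, and for a nonterminal vertex $V$ whose $0$-edge leads to $V_0$ and whose $1$-edge leads to $V_1$, $\phi_G(V)=\phi_G(V_0)^{(2^{L(V_0)-L(V)-1})}\phi_G(V_1)^{(2^{L(V_1)-L(V)-1})}$. *)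

(* Defs.v *)
From mathcomp Require Import all_boot.
Set Implicit Arguments. Unset Strict Implicit. Unset Printing Implicit Defensive.

(* A graph in the class G is given by a finite vertex type V, a predicate
   [term] marking the terminal vertices (no outgoing edges), and for each
   nonterminal vertex v its 0-successor [c0 v] and 1-successor [c1 v]
   (values of c0, c1 at terminal vertices are irrelevant), a level function L,
   the root r and the two terminals t0 = T^0, t1 = T^1. *)

Definition gedge (V : finType) (term : pred V) (c0 c1 : V -> V) : rel V :=
  fun u w => ~~ term u && ((c0 u == w) || (c1 u == w)).

Definition in_class (V : finType) (term : pred V) (c0 c1 : V -> V)
    (L : V -> nat) (r t0 t1 : V) : Prop :=
  let e := gedge term c0 c1 in
  [/\
      (forall u w, e u w -> ~~ connect e w u),
      [/\ ~~ term r, (forall v, connect e r v) &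
          (forall r', ~~ term r' -> (forall v, connect e r' v) -> r' = r)],
      [/\ t0 != t1, term t0, term t1 & (forall v, term v -> v = t0 \/ v = t1)],
      (forall v, ~~ term v -> c0 v != c1 v) &
      [/\ (forall v, 0 < L v), L r = 1, L t0 = L t1 &
          (forall u w, e u w -> L u < L w)]].

Definition srep (s : seq bool) (j : nat) : seq bool := flatten (nseq j s).

(* phi_G computed by structural recursion with fuel; with fuel #|V| this is the
   unique map satisfying the recursive defining equations on acyclic graphs
   (every directed path has fewer than #|V| edges). *)
Fixpoint phi_aux (V : finType) (term : pred V) (c0 c1 : V -> V) (L : V -> nat)
    (t0 t1 : V) (n : nat) (v : V) : seq bool :=
  if term v then
    (if v == t0 then [:: false] else if v == t1 then [:: true] else [::])
  else match n with
  | 0 => [::]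
  | n'.+1 =>
      srep (phi_aux term c0 c1 L t0 t1 n' (c0 v)) (2 ^ (L (c0 v) - L v - 1))
      ++ srep (phi_aux term c0 c1 L t0 t1 n' (c1 v)) (2 ^ (L (c1 v) - L v - 1))
  end.

Definition phi (V : finType) (term : pred V) (c0 c1 : V -> V) (L : V -> nat)
    (t0 t1 : V) (v : V) : seq bool :=
  phi_aux term c0 c1 L t0 t1 #|V| v.

(* Main.v *)
Require Import Defs.
From mathcomp Require Import all_boot.
From mathcomp Require Import zify.

Lemma size_srep (s : seq bool) j : size (srep s j) = j * size s.
Proof. elim: j => [|j IH] //=; rewrite /srep /= size_cat -/(srep s j) IH mulSn. by []. Qed.

Section S.
Variables (V : finType) (term : pred V) (c0 c1 : V -> V) (L : V -> nat) (t0 t1 : V).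
Let e := gedge term c0 c1.

Fixpoint hgtb (n : nat) (v : V) : bool :=
  term v || (match n with 0 => false | n'.+1 => hgtb n' (c0 v) && hgtb n' (c1 v) end).

Lemma nohgt_path n v : ~~ hgtb n v -> exists p, size p = n /\ path e v p.
Proof.
elim: n v => [|n IH] v /=.
  move=> _; by exists [::].
rewrite negb_or => /andP [nt]; rewrite negb_and => /orP [] /IH [p [sp pp]].
  exists (c0 v :: p); split; first by rewrite /= sp.
  by rewrite /= pp andbT /e /gedge nt eqxx.
exists (c1 v :: p); split; first by rewrite /= sp.
by rewrite /= pp andbT /e /gedge nt eqxx orbT.
Qed.

Hypothesis acyc : forall u w, e u w -> ~~ connect e w u.

Lemma path_uniq p v : path e v p -> uniq (v :: p) /\ forall x, x \in v :: p -> connect e v x.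
Proof.
elim: p v => [|w p IH] v /=.
  move=> _; split => // x; rewrite inE => /eqP ->; exact: connect0.
move=> /andP [evw /IH [U C]]; split.
  apply/andP; split; last exact: U.
  apply/negP => vin.
  by move: (acyc _ _ evw); rewrite (C v vin).
move=> x; rewrite inE => /orP [/eqP -> | xin]; first exact: connect0.
apply: connect_trans (C x xin); exact: connect1.
Qed.

Lemma all_hgt v : hgtb #|V| v.
Proof.
apply/negPn/negP => /nohgt_path [p [sp /path_uniq [U _]]].
have H := card_uniqP U.
have := max_card (mem (v :: p)); rewrite H /= sp ltnn //.
Qed.
End S.

Theorem lemma1 (V : finType) (term : pred V) (c0 c1 : V -> V) (L : V -> nat)
    (r t0 t1 : V) (HG : in_class term c0 c1 L r t0 t1)
    (k : nat) (hk : 0 < k) (hL0 : L t0 = k.+1) (hL1 : L t1 = k.+1) :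
  (forall v : V, size (phi term c0 c1 L t0 t1 v) = 2 ^ (k.+1 - L v))
  /\ size (phi term c0 c1 L t0 t1 r) = 2 ^ k.
Proof.
case: HG => acyc [ntr _ _] [t01 tt0 tt1 tT] _ [_ Lr _ Linc].
have main : forall n (v : V), @hgtb V term c0 c1 n v ->
    L v <= k.+1 /\ size (phi_aux term c0 c1 L t0 t1 n v) = 2 ^ (k.+1 - L v).
  elim=> [|n IH] v /=.
    rewrite orbF => tv; rewrite tv.
    case: (tT v tv) => ->; first by rewrite eqxx hL0 subnn.
    by rewrite eq_sym (negbTE t01) eqxx hL1 subnn.
  case tv: (term v) => /=.
    move=> _; case: (tT v tv) => ->; first by rewrite eqxx hL0 subnn.
    by rewrite eq_sym (negbTE t01) eqxx hL1 subnn.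
  move=> /andP [/IH [l0 s0] /IH [l1 s1]].
  have e0 : L v < L (c0 v) by apply: Linc; rewrite /gedge tv eqxx.
  have e1 : L v < L (c1 v) by apply: Linc; rewrite /gedge tv eqxx orbT.
  split; first by lia.
  rewrite size_cat !size_srep s0 s1 -!expnD.
  have -> : L (c0 v) - L v - 1 + (k.+1 - L (c0 v)) = k - L v by lia.
  have -> : L (c1 v) - L v - 1 + (k.+1 - L (c1 v)) = k - L v by lia.
  rewrite addnn -mul2n -expnS; congr (2 ^ _); lia.
have all : forall v, size (phi term c0 c1 L t0 t1 v) = 2 ^ (k.+1 - L v).
  move=> v; rewrite /phi; by case: (main _ v (@all_hgt V term c0 c1 acyc v)).
split => //; by rewrite all Lr subn1.
Qed.
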